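(* The functions $g_k(z)=\sum_{j=0}^{\infty}\frac{1}{(j+1)^k}z^j$, $k\in\mathbb{N}$ ($k\geq1$), span a dense subspace of $H^2$.
   Context: $H^2$ denotes the Hardy space of analytic functions $f(z)=\sum_{j\ge0}\hat f(j)z^j$ on the open unit disk with $\|f\|^2=\sum_{j}|\hat f(j)|^2<\infty$. *)

(* Defs.v *)
From Stdlib Require Import Reals.
From Coquelicot Require Export Coquelicot.
Open Scope R_scope.

(* An element of H^2 is identified with its Taylor coefficient sequence
   f : nat -> C (f j = \hat f(j)); membership = square summability. *)
Definition in_H2 (f : nat -> C) : Prop :=
  ex_series (fun j => (Cmod (f j)) ^ 2).

Definition H2_norm (f : nat -> C) : R :=
  sqrt (Series (fun j => (Cmod (f j)) ^ 2)).

Definition g (k : nat) (j : nat) : C := RtoC (/ (INR (j + 1)) ^ k).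

Fixpoint lincomb (c : nat -> C) (N : nat) (j : nat) : C :=
  match N with
  | O => RtoC 0
  | S n => Cplus (lincomb c n j) (Cmult (c (S n)) (g (S n) j))
  end.

(* Main.v *)
Require Import Defs.
From Stdlib Require Import Reals Lia Lra.
From Coquelicot Require Import Coquelicot.
Open Scope R_scope.

Lemma ex_series_lin (a b : nat -> R) (x y : R) :
  ex_series a -> ex_series b -> ex_series (fun n => x * a n + y * b n).
Proof.
  intros Ha Hb.
  apply (ex_series_plus (fun n => x * a n) (fun n => y * b n)).
  - apply (ex_series_scal_l x a Ha).
  - apply (ex_series_scal_l y b Hb).
Qed.

Lemma series_bound (a b c : nat -> R) (x y : R) :
  0 <= x -> 0 <= y ->
  (forall n, 0 <= a n <= x * b n + y * c n) ->
  ex_series b -> ex_series c ->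
  ex_series a /\ Series a <= x * Series b + y * Series c.
Proof.
  intros Hx Hy H Hb Hc.
  assert (E := ex_series_lin b c x y Hb Hc).
  split.
  - apply (ex_series_le a _ ) with (2 := E).
    intros n. unfold norm; simpl. rewrite Rabs_pos_eq by apply H. apply H.
  - eapply Rle_trans. apply Series_le. exact H. exact E.
    rewrite Series_plus.
    rewrite !Series_scal_l. lra.
    apply (ex_series_scal_l x b Hb).
    apply (ex_series_scal_l y c Hc).
Qed.

Lemma ex_series_zero : ex_series (fun _ : nat => 0).
Proof.
  assert (G : ex_series (fun n => (1/2)^n)) by (apply ex_series_geom; rewrite Rabs_pos_eq; lra).
  apply (@ex_series_ext R_AbsRing R_NormedModule (fun n => 0 * (1/2)^n)).
  intros; simpl; ring.
  apply (ex_series_scal_l 0 _ G).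
Qed.

Lemma Series_zero : Series (fun _ : nat => 0) = 0.
Proof.
  rewrite (Series_ext _ (fun n => 0 * (1/2)^n)) by (intros; ring).
  rewrite Series_scal_l. ring.
Qed.

Lemma Series_nonneg (a : nat -> R) : (forall n, 0 <= a n) -> ex_series a -> 0 <= Series a.
Proof.
  intros H E. rewrite <- Series_zero.
  apply Series_le; auto. intros; split; [lra| apply H].
Qed.

Lemma lincomb_plus c1 c2 N j :
  lincomb (fun k => Cplus (c1 k) (c2 k)) N j = Cplus (lincomb c1 N j) (lincomb c2 N j).
Proof. induction N; simpl. apply injective_projections; simpl; ring. rewrite IHN. ring. Qed.

Lemma lincomb_scal a c N j :
  lincomb (fun k => Cmult a (c k)) N j = Cmult a (lincomb c N j).
Proof. induction N; simpl. apply injective_projections; simpl; ring. rewrite IHN. ring. Qed.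

Lemma lincomb_ext c c' N j :
  (forall k, (k <= N)%nat -> c k = c' k) -> lincomb c N j = lincomb c' N j.
Proof.
  induction N; intros H; simpl. reflexivity.
  rewrite IHN by (intros; apply H; lia). rewrite H by lia. reflexivity.
Qed.

Lemma lincomb_zero c N j : (forall k, (k <= N)%nat -> c k = RtoC 0) -> lincomb c N j = RtoC 0.
Proof.
  induction N; intros H; simpl. reflexivity.
  rewrite IHN by (intros; apply H; lia). rewrite H by lia. ring.
Qed.

Lemma lincomb_pad c N M j :
  lincomb c N j = lincomb (fun k => if Nat.leb k N then c k else RtoC 0) (N + M) j.
Proof.
  induction M.
  - rewrite Nat.add_0_r. apply lincomb_ext. intros k Hk.
    destruct (Nat.leb_spec k N); [reflexivity| lia].
  - rewrite Nat.add_succ_r. cbn [lincomb]. rewrite <- IHM.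
    destruct (Nat.leb_spec (S (N + M)) N); [lia|]. ring.
Qed.

Lemma lincomb_single m j :
  lincomb (fun i => if Nat.eqb i (S m) then RtoC 1 else RtoC 0) (S m) j = g (S m) j.
Proof.
  simpl. rewrite lincomb_zero. rewrite Nat.eqb_refl. ring.
  intros k Hk. destruct (Nat.eqb_spec k (S m)); [lia| reflexivity].
Qed.

Definition sq (u v : nat -> C) (j : nat) : R := (Cmod (Cminus (u j) (v j))) ^ 2.

Definition Apx (v : nat -> C) : Prop :=
  forall eps, 0 < eps -> exists N c, ex_series (sq v (lincomb c N)) /\ Series (sq v (lincomb c N)) < eps.

Lemma sq_nonneg u v j : 0 <= sq u v j.
Proof. unfold sq. apply pow2_ge_0. Qed.

Lemma Cmod_sum_sq (a b : C) : Cmod (Cplus a b) ^ 2 <= 2 * Cmod a ^ 2 + 2 * Cmod b ^ 2.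
Proof.
  pose proof (Cmod_triangle a b). pose proof (Cmod_ge_0 a). pose proof (Cmod_ge_0 b).
  pose proof (Cmod_ge_0 (Cplus a b)).
  apply Rle_trans with ((Cmod a + Cmod b)^2). apply pow_incr; lra.
  pose proof (pow2_ge_0 (Cmod a - Cmod b)). nra.
Qed.

Lemma sq_tri u v w : ex_series (sq u v) -> ex_series (sq v w) ->
  ex_series (sq u w) /\ Series (sq u w) <= 2 * Series (sq u v) + 2 * Series (sq v w).
Proof.
  intros H1 H2. apply series_bound; try lra; auto.
  intros n; split. apply sq_nonneg. unfold sq.
  replace (Cminus (u n) (w n)) with (Cplus (Cminus (u n) (v n)) (Cminus (v n) (w n))) by ring.
  apply Cmod_sum_sq.
Qed.

Lemma sq_ext u u' v v' : (forall j, u j = u' j) -> (forall j, v j = v' j) ->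
  forall j, sq u v j = sq u' v' j.
Proof. intros H1 H2 j. unfold sq. rewrite H1, H2. reflexivity. Qed.

Lemma Apx_ext u v : Apx u -> (forall j, u j = v j) -> Apx v.
Proof.
  intros H E eps Heps. destruct (H eps Heps) as (N & c & H1 & H2).
  exists N, c. 
  assert (X : forall j, sq u (lincomb c N) j = sq v (lincomb c N) j) by (apply sq_ext; auto).
  split. eapply ex_series_ext. exact X. exact H1.
  rewrite <- (Series_ext _ _ X). exact H2.
Qed.

Lemma sq_self u : forall j, sq u u j = 0.
Proof. intros j. unfold sq. replace (Cminus (u j) (u j)) with (RtoC 0) by ring.
  rewrite Cmod_0. ring. Qed.

Lemma Apx_lincomb c N : Apx (lincomb c N).
Proof.
  intros eps Heps. exists N, c.
  split. eapply ex_series_ext. intros j; symmetry; apply sq_self. apply ex_series_zero.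
  rewrite (Series_ext _ _ (sq_self _)). rewrite Series_zero. exact Heps.
Qed.

Lemma Apx_zero : Apx (fun _ => RtoC 0).
Proof.
  apply Apx_ext with (lincomb (fun _ => RtoC 0) 0). apply Apx_lincomb. reflexivity.
Qed.

Lemma Apx_g m : Apx (g (S m)).
Proof.
  eapply Apx_ext. apply Apx_lincomb. intros j. apply lincomb_single.
Qed.

Lemma Apx_lim v : (forall eps, 0 < eps -> exists u, Apx u /\ ex_series (sq v u) /\ Series (sq v u) < eps) -> Apx v.
Proof.
  intros H eps Heps.
  destruct (H (eps/4)) as (u & Hu & E1 & S1). lra.
  destruct (Hu (eps/4)) as (N & c & E2 & S2). lra.
  exists N, c. destruct (sq_tri _ _ _ E1 E2) as [E3 S3]. split; auto. lra.
Qed.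

Lemma Apx_plus u v : Apx u -> Apx v -> Apx (fun j => Cplus (u j) (v j)).
Proof.
  intros Hu Hv eps Heps.
  destruct (Hu (eps/4)) as (N1 & c1 & E1 & S1). lra.
  destruct (Hv (eps/4)) as (N2 & c2 & E2 & S2). lra.
  set (cc := fun k => Cplus (if Nat.leb k N1 then c1 k else RtoC 0)
                                       (if Nat.leb k N2 then c2 k else RtoC 0)).
  exists (N1 + N2)%nat, cc.
  assert (L : forall j, lincomb cc (N1 + N2) j
              = Cplus (lincomb c1 N1 j) (lincomb c2 N2 j)).
  { intros j. unfold cc. rewrite lincomb_plus. rewrite (lincomb_pad c1 N1 N2).
    rewrite (lincomb_pad c2 N2 N1). rewrite (Nat.add_comm N2 N1). reflexivity. }
  destruct (series_bound (sq (fun j => Cplus (u j) (v j)) (lincomb cc (N1 + N2)))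
              (sq u (lincomb c1 N1)) (sq v (lincomb c2 N2)) 2 2) as [E S]; try lra; auto.
  intros n; split. apply sq_nonneg. unfold sq. rewrite L.
  replace (Cminus (Cplus (u n) (v n)) (Cplus (lincomb c1 N1 n) (lincomb c2 N2 n)))
    with (Cplus (Cminus (u n) (lincomb c1 N1 n)) (Cminus (v n) (lincomb c2 N2 n))) by ring.
  apply Cmod_sum_sq.
  split; auto. lra.
Qed.

Lemma Apx_scal a u : Apx u -> Apx (fun j => Cmult a (u j)).
Proof.
  intros Hu eps Heps.
  set (K := Cmod a ^ 2).
  assert (K0 : 0 <= K) by apply pow2_ge_0.
  destruct (Hu (eps / (K + 1))) as (N & c & E & S). apply Rdiv_lt_0_compat; lra.
  exists N, (fun k => Cmult a (c k)).
  destruct (series_bound (sq (fun j => Cmult a (u j)) (lincomb (fun k => Cmult a (c k)) N))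
              (sq u (lincomb c N)) (sq u (lincomb c N)) K 0) as [E2 S2]; try lra; auto.
  intros n; split. apply sq_nonneg. unfold sq. rewrite lincomb_scal.
  replace (Cminus (Cmult a (u n)) (Cmult a (lincomb c N n))) with (Cmult a (Cminus (u n) (lincomb c N n))) by ring.
  rewrite Cmod_mult. unfold K. rewrite Rpow_mult_distr. lra.
  split; auto.
  assert (Z := Series_nonneg _ (sq_nonneg u (lincomb c N)) E).
  assert (K * Series (sq u (lincomb c N)) <= (K+1) * Series (sq u (lincomb c N))) by nra.
  assert ((K+1) * Series (sq u (lincomb c N)) < (K+1) * (eps / (K+1))).
  { apply Rmult_lt_compat_l; lra. }
  replace ((K+1) * (eps / (K+1))) with eps in H0 by (field; lra). lra.
Qed.

Definition e (n j : nat) : C := RtoC (if Nat.eqb j n then 1 else 0).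

Fixpoint fsum (F : nat -> nat -> C) (n j : nat) : C :=
  match n with O => RtoC 0 | S n => Cplus (fsum F n j) (F n j) end.

Lemma Apx_fsum F n : (forall m, (m < n)%nat -> Apx (F m)) -> Apx (fsum F n).
Proof.
  induction n; intros H.
  - apply Apx_zero.
  - apply (Apx_plus (fsum F n) (F n)). apply IHn; intros; apply H; lia. apply H; lia.
Qed.

Lemma fsum_delta (a : nat -> C) n j :
  fsum (fun m j => Cmult (a m) (e m j)) n j = if Nat.ltb j n then a j else RtoC 0.
Proof.
  induction n; simpl.
  - destruct (Nat.ltb_spec j 0); [lia|reflexivity].
  - rewrite IHn. unfold e.
    destruct (Nat.ltb_spec j n); destruct (Nat.ltb_spec j (S n)); destruct (Nat.eqb_spec j n);
      try lia; try (subst; apply injective_projections; simpl; ring).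
Qed.

Definition h (j : nat) : R := (/ INR (j + 1)) ^ 2.

Lemma INR_S1 j : INR (j + 1) = INR j + 1.
Proof. rewrite plus_INR. simpl. ring. Qed.

Lemma ex_series_h : ex_series h.
Proof.
  set (t := fun j : nat => / (INR j + 1) - / (INR j + 2)).
  assert (St : forall n, sum_n t n = 1 - / (INR n + 2)).
  { induction n. rewrite sum_O. unfold t. simpl. field.
    rewrite sum_Sn, IHn. unfold t. change (plus ?a ?b) with (a + b). rewrite S_INR.
    pose proof (pos_INR n). match goal with |- ?a = ?b => change (@eq R a b) end. field. lra. }
  assert (Lt : is_lim_seq (sum_n t) 1).
  { apply is_lim_seq_ext with (fun n => 1 - / (INR n + 2)). intros; symmetry; apply St.
    replace (Finite 1) with (Finite (1 - 0)) by (f_equal; ring).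
    apply is_lim_seq_minus'. apply is_lim_seq_const.
    assert (P : is_lim_seq (fun n => INR n + 2) p_infty).
    { apply (is_lim_seq_plus _ _ p_infty 2 p_infty). apply is_lim_seq_INR. apply is_lim_seq_const. reflexivity. }
    assert (I := is_lim_seq_inv _ _ P ltac:(discriminate)). simpl in I. exact I. }
  assert (Et : ex_series t) by (exists 1; exact Lt).
  apply (ex_series_le h (fun n => 2 * t n)).
  - intros n. unfold norm; simpl. unfold h, t. rewrite INR_S1.
    pose proof (pos_INR n) as H. revert H. generalize (INR n). intros x H.
    set (y := / (x + 1)).
    assert (Hy : 0 < y <= 1). { unfold y. split. apply Rinv_0_lt_compat; lra.
      assert (/ (x + 1) <= / 1) by (apply Rinv_le_contravar; lra). rewrite Rinv_1 in H0. exact H0. }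
    assert (E1 : / (x + 2) = y / (1 + y)). { unfold y. field. lra. }
    rewrite E1. rewrite Rabs_pos_eq by (apply pow2_ge_0).
    assert (E2 : 2 * (y - y / (1 + y)) - y ^ 2 = y * y * (1 - y) / (1 + y)) by (field; lra).
    assert (0 <= y * y * (1 - y) / (1 + y)).
    { apply Rdiv_le_0_compat. apply Rmult_le_pos. nra. lra. lra. }
    lra.
  - apply (ex_series_scal_l 2 t Et).
Qed.

Lemma Apx_e : forall n, Apx (e n).
Proof.
  intros n. induction n as [n IH] using (well_founded_induction Wf_nat.lt_wf).
  apply Apx_lim. intros eps Heps.
  set (Z := Series h).
  assert (Z0 : 0 <= Z).
  { apply Series_nonneg. intros; apply pow2_ge_0. apply ex_series_h. }
  pose proof (pos_INR n) as Pn.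
  set (r := (INR n + 1) / (INR n + 2)).
  assert (Hr : 0 < r < 1). { unfold r. split. apply Rdiv_lt_0_compat; lra.
     apply Rmult_lt_reg_r with (INR n + 2). lra. unfold Rdiv. rewrite Rmult_assoc, Rinv_l by lra. lra. }
  set (K := (INR n + 1) ^ 2 * Z).
  assert (K0 : 0 <= K) by (unfold K; apply Rmult_le_pos; [apply pow2_ge_0|auto]).
  destruct (pow_lt_1_zero r ltac:(rewrite Rabs_pos_eq; lra) (eps / (K + 1))) as [M HM].
  { apply Rdiv_lt_0_compat; lra. }
  specialize (HM M (le_n M)). rewrite Rabs_pos_eq in HM by (apply pow_le; lra).
  set (k := S M).
  set (a := fun p : nat => RtoC (- ((INR n + 1) / (INR p + 1)) ^ k)).
  set (u := fun j => Cplus (Cmult (RtoC ((INR n + 1) ^ k)) (g k j))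
                           (fsum (fun p j => Cmult (a p) (e p j)) n j)).
  exists u. split.
  { apply Apx_plus. apply Apx_scal. apply Apx_g.
    apply Apx_fsum. intros m Hm. apply Apx_scal. apply IH. exact Hm. }
  set (E := fun j => (if Nat.eqb j n then 1 else 0) - (INR n + 1) ^ k * / INR (j + 1) ^ k
                      - (if Nat.ltb j n then - ((INR n + 1) / (INR j + 1)) ^ k else 0)).
  assert (SE : forall j, sq (e n) u j = E j ^ 2).
  { intros j. unfold sq. replace (Cminus (e n j) (u j)) with (RtoC (E j)).
    rewrite Cmod_R. rewrite <- Rsqr_pow2, <- Rsqr_abs, Rsqr_pow2. reflexivity.
    unfold u. rewrite fsum_delta. unfold E, a, e, g.
    destruct (Nat.ltb j n); destruct (Nat.eqb j n); apply injective_projections; simpl; ring. }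
  assert (B : forall j, 0 <= sq (e n) u j <= (r ^ M * (INR n + 1) ^ 2) * h j + 0 * h j).
  { intros j. split. apply sq_nonneg. rewrite SE. unfold E, h.
    assert (Hh : 0 <= r ^ M * (INR n + 1) ^ 2 * (/ INR (j + 1)) ^ 2).
    { apply Rmult_le_pos. apply Rmult_le_pos. apply pow_le; lra. apply pow2_ge_0. apply pow2_ge_0. }
    rewrite INR_S1 in *. rewrite <- pow_inv.
    rewrite <- Rpow_mult_distr.
    destruct (Nat.ltb_spec j n); destruct (Nat.eqb_spec j n); try lia.
    - replace ((INR n + 1) * / (INR j + 1)) with ((INR n + 1) / (INR j + 1)) by reflexivity.
      replace (0 - ((INR n + 1) / (INR j + 1)) ^ k - - ((INR n + 1) / (INR j + 1)) ^ k) with 0 by ring.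
      simpl. lra.
    - subst j. rewrite Rinv_r by lra. rewrite pow1. simpl. lra.
    - pose proof (pos_INR j) as Pj.
      assert (Jn : INR n + 2 <= INR j + 1).
      { replace (INR n + 2) with (INR (S n) + 1) by (rewrite S_INR; ring).
        apply Rplus_le_compat_r. apply le_INR. lia. }
      set (q := (INR n + 1) * / (INR j + 1)).
      assert (Hq : 0 < q <= r).
      { unfold q, r. split. apply Rmult_lt_0_compat. lra. apply Rinv_0_lt_compat; lra.
        unfold Rdiv. apply Rmult_le_compat_l. lra. apply Rinv_le_contravar; lra. }
      assert (q1 : q ^ M <= r ^ M) by (apply pow_incr; lra).
      assert (q2 : q ^ M <= 1) by (rewrite <- (pow1 M); apply pow_incr; lra).
      assert (Q2 : q ^ 2 = (INR n + 1) ^ 2 * (/ (INR j + 1)) ^ 2) by (unfold q; apply Rpow_mult_distr).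
      assert (Q0 : 0 <= q ^ M) by (apply pow_le; lra).
      assert (Q3 : (q ^ M) ^ 2 <= r ^ M) by nra.
      assert (Q4 : 0 <= q ^ 2) by apply pow2_ge_0.
      replace ((0 - q ^ k - 0) ^ 2) with ((q ^ M) ^ 2 * q ^ 2) by (unfold k; simpl; ring).
      replace (r ^ M * (INR n + 1) ^ 2 * (/ (INR j + 1)) ^ 2 + 0 * (/ (INR j + 1)) ^ 2)
        with (r ^ M * q ^ 2) by (rewrite Q2; ring).
      apply Rmult_le_compat_r; lra. }
  assert (X0 : 0 <= r ^ M * (INR n + 1) ^ 2).
  { apply Rmult_le_pos. apply pow_le; lra. apply pow2_ge_0. }
  destruct (series_bound _ _ _ _ _ X0 (Rle_refl 0) B ex_series_h ex_series_h) as [E1 S1].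
  split; auto. fold Z in S1.
  assert (r ^ M * K <= r ^ M * (K + 1)) by (apply Rmult_le_compat_l; [apply pow_le|]; lra).
  assert (r ^ M * (K + 1) < eps / (K + 1) * (K + 1)) by (apply Rmult_lt_compat_r; lra).
  replace (eps / (K + 1) * (K + 1)) with eps in H0 by (field; lra).
  unfold K in *. nra.
Qed.

Lemma tail_small (a : nat -> R) : ex_series a ->
  forall eps, 0 < eps -> exists N, ex_series (fun j => if Nat.ltb j N then 0 else a j)
     /\ Series (fun j => if Nat.ltb j N then 0 else a j) < eps.
Proof.
  intros Ea eps Heps.
  assert (L : is_lim_seq (sum_n a) (Series a)) by (apply Series_correct; exact Ea).
  apply is_lim_seq_spec in L.
  destruct (L (mkposreal eps Heps)) as [N0 HN]. simpl in HN.
  specialize (HN N0 (le_n N0)).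
  exists (S N0).
  set (b := fun j => if Nat.ltb j (S N0) then 0 else a j).
  assert (Sh : forall k, b (S N0 + k)%nat = a (S N0 + k)%nat).
  { intros k. unfold b. destruct (Nat.ltb_spec (S N0 + k) (S N0)); [lia|reflexivity]. }
  assert (Ea' : ex_series (fun k => a (S N0 + k)%nat)) by (apply ex_series_incr_n; exact Ea).
  assert (Eb : ex_series b).
  { apply (ex_series_incr_n b (S N0)). eapply ex_series_ext. intros k; symmetry; apply Sh. exact Ea'. }
  split. exact Eb.
  rewrite (Series_incr_n_aux b (S N0)).
  2: { intros k Hk. unfold b. destruct (Nat.ltb_spec k (S N0)); [reflexivity|lia]. }
  rewrite (Series_ext _ _ Sh).
  assert (I := Series_incr_n a (S N0) ltac:(lia) Ea). change (Init.Nat.pred (S N0)) with N0 in I.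
  rewrite <- sum_n_Reals in I.
  apply Rabs_lt_between in HN. lra.
Qed.

Theorem mainTheorem11 :
  forall f : nat -> C, in_H2 f ->
  forall eps : R, 0 < eps ->
  exists (N : nat) (c : nat -> C),
    in_H2 (fun j => Cminus (f j) (lincomb c N j)) /\
    H2_norm (fun j => Cminus (f j) (lincomb c N j)) < eps.
Proof.
  intros f Hf eps Heps.
  assert (Af : Apx f).
  { apply Apx_lim. intros d Hd.
    destruct (tail_small _ Hf d Hd) as (N & E & S).
    set (u := fsum (fun p j => Cmult (f p) (e p j)) N).
    assert (Eq : forall j, sq f u j = if Nat.ltb j N then 0 else Cmod (f j) ^ 2).
    { intros j. unfold sq, u. rewrite fsum_delta. destruct (Nat.ltb j N).
      replace (Cminus (f j) (f j)) with (RtoC 0) by ring. rewrite Cmod_0. ring.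
      replace (Cminus (f j) (RtoC 0)) with (f j) by ring. reflexivity. }
    exists u. split.
    - apply Apx_fsum. intros m _. apply Apx_scal. apply Apx_e.
    - split. eapply ex_series_ext. intros j; symmetry; apply Eq. exact E.
      rewrite (Series_ext _ _ Eq). exact S. }
  destruct (Af (eps ^ 2)) as (N & c & E & S). apply pow_lt; lra.
  exists N, c. split. exact E.
  unfold H2_norm.
  rewrite <- (sqrt_pow2 eps) by lra.
  apply sqrt_lt_1. apply Series_nonneg. intros; apply pow2_ge_0. exact E.
  apply pow2_ge_0. exact S.
Qed.
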